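(* Let $s>1$. Let $z\in H$ with $\operatorname{Im} z<1$ be such that no element of $\Gamma_l$ maps $z$ into $\{w\in H:\operatorname{Im} w>1\}$. Then for all $t$, $$\Pi_l(z,t)\le \Pi_l(h,z,t)\le \Pi_l(z,t+1),$$ and $$E^l(z,s)=s\int_0^\infty e^{-st}\,\Pi_l(h,z,t)\,dt,$$ $$s\int_0^\infty e^{-st}\,\Pi_l(z,t)\,dt\le E^l(z,s)\le s\int_0^\infty e^{-st}\,\Pi_l(z,t+1)\,dt.$$
   Context: Let $\{S_l\}$ be a degenerating family of hyperbolic Riemann surfaces of genus $g$ with one puncture, parametrized by $l$ near $0\in\mathbf{R}^{6g-4}$. For each $l$, $\Gamma_l$ is a Fuchsian group with $S_l\simeq H/\Gamma_l$, where $H$ is the upper half plane with hyperbolic distance $d(\cdot,\cdot)$; $\Gamma_l$ contains $z\mapsto z+1$, and $\Gamma_\infty$ is the cyclic group it generates. The Eisenstein series is $E^l(z,s)=\sum_{\delta\in\Gamma_\infty\backslash\Gamma_l}(\operatorname{Im}\delta z)^s$ for $z\in H$, $\operatorname{Re}s>1$. For $z\in H$ and $[\delta]\in\Gamma_\infty\backslash\Gamma_l$, the canonical representative $\hat\delta$ is the unique element of $[\delta]$ with $-\tfrac12\le\operatorname{Re}\hat\delta z<\tfrac12$. Let $h=\{w\in H: -\tfrac12\le\operatorname{Re} w<\tfrac12,\ \operatorname{Im} w=1\}$. For $z$ with $\operatorname{Im} z<1$ define $\Pi_l(h,z,t)=\#\{[\delta]\in\Gamma_\infty\backslash\Gamma_l: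 d(h,\hat\delta z)\le t\}$ and $\Pi_l(z,t)=\#\{[\delta]\in\Gamma_\infty\backslash\Gamma_l: d(i,\hat\delta z)\le t\}$. *)

(* Defs.v *)
From HB Require Import structures.
From mathcomp Require Import all_boot all_order all_algebra.
From mathcomp Require Import all_classical all_reals all_analysis.
Set Implicit Arguments. Unset Strict Implicit. Unset Printing Implicit Defensive.
Import Order.TTheory GRing.Theory Num.Theory.
Local Open Scope classical_set_scope.
Local Open Scope ring_scope.

(* Points of C are pairs (Re, Im); the upper half plane H is Im > 0. *)
Definition pt (R : realType) := (R * R)%type.
Definition Hplane (R : realType) : set (pt R) := [set w | 0 < w.2].

Definition arccosh (R : realType) (u : R) : R := ln (u + Num.sqrt (u ^+ 2 - 1)).
Definition hdist (R : realType) (z w : pt R) : R :=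
  arccosh (1 + ((z.1 - w.1) ^+ 2 + (z.2 - w.2) ^+ 2) / (2 * z.2 * w.2)).

Definition hdist_set (R : realType) (A : set (pt R)) (w : pt R) : R :=
  inf [set hdist a w | a in A].

Definition pt_i (R : realType) : pt R := (0, 1).
Definition hseg (R : realType) : set (pt R) :=
  [set w | -(2^-1) <= w.1 /\ w.1 < 2^-1 /\ w.2 = 1].

(* Moebius action of a 2x2 real matrix g = (a b; c d) on z = x + i y:
   g z = (a z + b) / (c z + d), written out in real and imaginary parts. *)
Definition moeb (R : realType) (g : 'M[R]_2) (z : pt R) : pt R :=
  let a := g ord0 ord0 in let b := g ord0 ord_max in
  let c := g ord_max ord0 in let d := g ord_max ord_max in
  let x := z.1 in let y := z.2 in
  let den := (c * x + d) ^+ 2 + (c * y) ^+ 2 in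
  (((a * x + b) * (c * x + d) + a * c * y ^+ 2) / den, y / den).

(* Fuchsian group, represented by its full preimage Gam in SL(2,R)
   (so Gam contains -1; the corresponding subgroup of PSL(2,R) is Gam/{+-1}). *)
Definition is_fuchsian (R : realType) (Gam : set 'M[R]_2) : Prop :=
  [/\ (forall g, Gam g -> \det g = 1),
      Gam (1%:M) /\ Gam (- (1%:M)),
      (forall g k, Gam g -> Gam k -> Gam (g *m k)),
      (forall g, Gam g -> Gam (invmx g)) &
      (* discreteness: only finitely many elements in every bounded set *)
      (forall K : R, finite_set [set g | Gam g /\ forall i j, `|g i j| <= K])].

(* torsion free (no elliptic elements): the quotient is a hyperbolic surface *)
Definition torsion_free (R : realType) (Gam : set 'M[R]_2) : Prop :=
  forall g, Gam g -> g <> 1%:M -> g <> - 1%:M -> 2 <= `|\tr g|.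

Definition transl (R : realType) (n : int) : 'M[R]_2 :=
  \matrix_(i < 2, j < 2)
    (if (i == ord0) && (j == ord_max) then n%:~R else if i == j then 1 else 0).

(* Gamma_infty = <z |-> z+1> (in PSL), i.e. {+- T^n} in SL(2,R) *)
Definition Gam_inf (R : realType) : set 'M[R]_2 :=
  [set g | exists n : int, g = @transl R n \/ g = - @transl R n].

Definition coset_inf (R : realType) (delta : 'M[R]_2) : set 'M[R]_2 :=
  [set g | exists2 t, @Gam_inf R t & g = t *m delta].

Definition cosets (R : realType) (Gam : set 'M[R]_2) : set (set 'M[R]_2) :=
  [set @coset_inf R delta | delta in Gam].

(* the canonical representative hat-delta of the coset C w.r.t. z satisfies
   -1/2 <= Re (hat-delta z) < 1/2; it is unique up to sign, so its action
   hat-delta z is well defined. *)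
Definition canon_prop (R : realType) (C : set 'M[R]_2) (z : pt R)
  (P : pt R -> Prop) : Prop :=
  exists2 g, C g & (-(2^-1) <= (moeb g z).1 /\ (moeb g z).1 < 2^-1) /\ P (moeb g z).

(* counting functions, with values in \bar R (+oo if infinite) *)
Definition Pi_h (R : realType) (Gam : set 'M[R]_2) (z : pt R) (t : R) : \bar R :=
  (\esum_(C in cosets Gam `&` [set C | canon_prop C z (fun w => (hdist_set (@hseg R) w <= t)%R)])
     1)%E.
Definition Pi_i (R : realType) (Gam : set 'M[R]_2) (z : pt R) (t : R) : \bar R :=
  (\esum_(C in cosets Gam `&` [set C | canon_prop C z (fun w => (hdist (@pt_i R) w <= t)%R)])
     1)%E.

Definition eisenstein (R : realType) (Gam : set 'M[R]_2) (z : pt R) (s : R) : \bar R :=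
  (\esum_(C in cosets Gam)
     ((moeb (xget (1%:M) C) z).2 `^ s)%:E)%E.

(* Main.v *)
Require Import Defs.
From HB Require Import structures.
From mathcomp Require Import all_boot all_order all_algebra.
From mathcomp Require Import all_classical all_reals all_analysis.
From mathcomp Require Import measurable_realfun.
From mathcomp Require Import ring lra.
Import Order.TTheory GRing.Theory Num.Def Num.Theory.
Import numFieldNormedType.Exports.
Local Open Scope classical_set_scope.
Local Open Scope ring_scope.
Lemma memle {R : realType} (T : Type) (f : T -> R) t x :
  (x \in [set y | (f y <= t)%R]) = (f x <= t)%R.
Proof. by apply/idP/idP; rewrite inE. Qed.
Lemma memle2 {R : realType} (b t : R) :
  (t \in [set y | (b <= y)%R]) = (b <= t)%R.
Proof. by apply/idP/idP; rewrite inE. Qed.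
Section S.
Context {R : realType}.
Notation mu := (@lebesgue_measure R).

Lemma one_term (s b : R) : 0 < s ->
 (s%:E * \int[mu]_(t in [set t : R | (0 <= t)%R]) ((expR (- (s*t)) * \1_[set t | (b <= t)%R] t)%R%:E)
   = (expR (- (s * Num.max b 0))%R)%:E)%E.
Proof.
move=> s0.
set c := Num.max b 0.
have c0 : 0 <= c by rewrite /c le_max lexx orbT.
transitivity (\int[mu]_(x in `[c, +oo[) (exponential_pdf s x)%:E)%E.
  have mf : measurable_fun [set t : R | (0 <= t)%R]
     (fun t : R => ((expR (- (s*t)) * \1_[set t | (b <= t)%R] t)%R%:E)%E).
    apply/measurable_EFinP => /=; apply: measurable_funM.
      apply: measurable_funTS; apply: continuous_measurable_fun.
      move=> x; apply: continuous_comp; last exact: continuous_expR.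
      by apply: continuousN; apply: continuousM => //; exact: cst_continuous.
    apply: measurable_indic. rewrite (_ : [set t | (b <= t)%R] = `[b, +oo[%classic).
      exact: measurable_itv.
    by apply/seteqP; split => x /=; rewrite in_itv /= andbT.
  rewrite -ge0_integralZl_EFin //; last 2 first.
    rewrite (_ : [set t : R | (0 <= t)%R] = `[0, +oo[%classic); first exact: measurable_itv.
    by apply/seteqP; split => x /=; rewrite in_itv /= andbT.
    exact: ltW.
  have -> : `[c, +oo[%classic = [set t : R | (0 <= t)%R] `&` [set t | (b <= t)%R].
    apply/seteqP; split => x /=; rewrite in_itv /= andbT /c ge_max.
      by move=> /andP[]. by move=> [] -> ->.
  rewrite integral_mkcondr; apply: eq_integral => x; rewrite inE /= => x0.
  rewrite patchE indicE mem_setE /=; case: ifPn => bx.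
    by rewrite mulr1 exponential_pdfE // mulNr.
  by rewrite mulr0 mule0.
rewrite (@ge0_continuous_FTC2y _ _ (fun x => - (expR (- s * x))) _ 0)//.
- by rewrite EFinN oppeK add0e mulNr.
- by move=> x _; apply: exponential_pdf_ge0; exact: ltW.
- apply: (@continuous_subspaceW R^o _ _ [set` `[0, +oo[%R]).
    by apply: subset_itvr; rewrite bnd_simp.
  exact: within_continuous_exponential_pdf.
- rewrite -oppr0; apply: cvgN.
  rewrite (_ : (fun x => expR (- s * x)) =
               (fun z => expR (- z)) \o (fun z => s * z)); last first.
    by apply: eq_fun => x; rewrite mulNr.
  apply: (@cvg_comp _ _ _ _ _ _ (pinfty_nbhs R)); last exact: cvgr_expR.
  exact: gt0_cvgMry.
- have cexpNM : continuous (fun z : R^o => expR (- s * z)).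
    move=> z; apply: continuous_comp; last exact: continuous_expR.
    by apply: continuousM => //; apply: (@continuousN _ R^o); exact: cst_continuous.
  by apply: cvgN; apply/cvg_at_right_filter; exact: cexpNM.
- move=> x; rewrite in_itv/= andbT => cx.
  apply: derive1_exponential_pdf; rewrite in_itv/= andbT.
  exact: le_lt_trans cx.
Qed.

Lemma mD0 : measurable [set t : R | (0 <= t)%R].
Proof.
rewrite (_ : [set t : R | (0 <= t)%R] = `[0, +oo[%classic); first exact: measurable_itv.
by apply/seteqP; split => x /=; rewrite in_itv /= andbT.
Qed.

Lemma meas_term (s b : R) : measurable_fun [set t : R | (0 <= t)%R]
     (fun t : R => ((expR (- (s*t)) * \1_[set t | (b <= t)%R] t)%R%:E)).
Proof.
    apply/measurable_EFinP => /=; apply: measurable_funM.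
      apply: measurable_funTS; apply: continuous_measurable_fun.
      move=> x; apply: continuous_comp; last exact: continuous_expR.
      by apply: continuousN; apply: continuousM => //; exact: cst_continuous.
    apply: measurable_indic. rewrite (_ : [set t | (b <= t)%R] = `[b, +oo[%classic).
      exact: measurable_itv.
    by apply/seteqP; split => x /=; rewrite in_itv /= andbT.
Qed.

Lemma key (T : choiceType) (x0 : T) (A : set T) (a : T -> R) (s : R) :
  countable A -> 0 < s ->
  (s%:E * \int[mu]_(t in [set t : R | (0 <= t)%R])
      ((expR (- (s*t))%R)%:E * \esum_(C in A `&` [set C | (a C <= t)%R]) 1)
   = \esum_(C in A) (expR (- (s * Num.max (a C) 0))%R)%:E)%E.
Proof.
move=> /countable_injP [f finj] s0.
set N := f @` A.
set g := 'pinv_(fun=> x0) A f.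
have bij : set_bij N A g := @injpinv_bij _ _ (fun=> x0) A f finj.
pose P : pred nat := fun n => `[< N n >].
have E1 (h : T -> \bar R) : (forall C, (0 <= h C)%E) ->
    (\esum_(C in A) h C = \sum_(n <oo) (if P n then h (g n) else 0))%E.
  move=> h0; rewrite (@reindex_esum _ _ _ _ _ _ h bij) -eseries_mkcond nneseries_esum //.
  congr esum; apply/seteqP; split => x /=; rewrite /P.
    by move=> Nx; apply/asboolP.
  by move/asboolP.
pose u n t := ((if P n then expR (- (s*t)) * \1_[set t | (a (g n) <= t)%R] t else 0)%R)%:E.
have u0 n t : (0 <= u n t)%E.
  by rewrite /u lee_fin; case: ifPn => // _; rewrite mulr_ge0 ?expR_ge0.
have mu_ n : measurable_fun [set t : R | (0 <= t)%R] (u n).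
  rewrite /u; case: (P n); first exact: meas_term.
  exact: measurable_cst.
transitivity (s%:E * \int[mu]_(t in [set t : R | (0 <= t)%R]) \sum_(n <oo) u n t)%E.
  congr (_ * _)%E; apply: eq_integral => t _.
  rewrite esum_mkcondr E1; last by move=> C; case: ifPn.
  rewrite -nneseriesZl; last by move=> n _; do 2 case: ifPn => //.
  apply: eq_eseriesr => n _; rewrite /u; case: ifPn => _; last by rewrite mule0.
  rewrite indicE memle memle2.
  by case: ifPn => _; rewrite ?mulr1 ?mulr0 ?mule1 ?mule0.
rewrite integral_nneseries //; last exact: mD0.
rewrite -nneseriesZl; last by move=> n _; apply: integral_ge0 => t _.
rewrite E1; last by move=> C; rewrite lee_fin expR_ge0.
apply: eq_eseriesr => n _; rewrite /u; case: ifPn => _.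
  exact: one_term.
by rewrite integral0 mule0.
Qed.

End S.
Section Geo.
Variable R : realType.
Implicit Types (g : 'M[R]_2) (z : pt R).

Lemma detrow0 g : g ord_max ord0 = 0 -> g ord_max ord_max = 0 -> \det g = 0.
Proof.
move=> c0 d0; rewrite (expand_det_row _ ord_max) big1 // => j _.
have -> : g ord_max j = 0.
  by case: j => [[|[|//]]] Hj; [rewrite -c0 | rewrite -d0]; congr (g _ _); apply: val_inj.
by rewrite mul0r.
Qed.

Lemma den_pos g z : \det g = 1 -> 0 < z.2 ->
  0 < (g ord_max ord0 * z.1 + g ord_max ord_max)^+2 + (g ord_max ord0 * z.2)^+2.
Proof.
move=> dg y0.
case: (eqVneq (g ord_max ord0) 0) => c0.
  have d0 : g ord_max ord_max != 0.
    by apply/eqP => d0; move: dg; rewrite detrow0 // => /eqP; rewrite eq_sym oner_eq0.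
  rewrite c0 !mul0r add0r expr0n /= addr0.
  by rewrite exprn_even_gt0.
rewrite ltr_pwDr ?sqr_ge0 // exprn_even_gt0 // mulf_neq0 //.
by rewrite gt_eqF.
Qed.

Lemma moebN g z : moeb (- g) z = moeb g z.
Proof.
rewrite /moeb !mxE; congr (_ / _, _ / _); ring.
Qed.

Lemma transl_mul (n : int) g : @transl R n *m g =
  \matrix_(i < 2, j < 2) (if i == ord0 then g ord0 j + n%:~R * g ord_max j else g ord_max j).
Proof.
apply/matrixP => i j; rewrite !mxE big_ord_recl big_ord_recl big_ord0 !mxE /=.
have -> : lift ord0 (ord0 : 'I_1) = ord_max :> 'I_2 by apply: val_inj.
case: i => [[|[|//]]] Hi /=.
  by rewrite mul1r addr0.
by rewrite mul0r add0r mul1r addr0.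
Qed.

Lemma moebT (n : int) g z : \det g = 1 -> 0 < z.2 ->
  moeb (@transl R n *m g) z = ((moeb g z).1 + n%:~R, (moeb g z).2).
Proof.
move=> dg y0; have := @den_pos g z dg y0.
rewrite /moeb transl_mul !mxE /=.
set c := g ord_max ord0; set d := g ord_max ord_max.
set a := g ord0 ord0; set b := g ord0 ord_max.
move=> dp; congr (_, _).
by field; rewrite gt_eqF.
Qed.


Lemma arccosh_le (u v : R) : 1 <= u -> u <= v -> arccosh u <= arccosh v.
Proof.
move=> u1 uv; rewrite /arccosh.
have v1 : 1 <= v by apply: le_trans uv.
rewrite ler_ln ?posrE; last 2 first.
- by rewrite ltr_pwDl ?sqrtr_ge0 // (lt_le_trans ltr01).
- by rewrite ltr_pwDl ?sqrtr_ge0 // (lt_le_trans ltr01).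
rewrite lerD // ler_wsqrtr // lerB // ler_pXn2r // ?nnegrE.
- by rewrite (le_trans ler01).
- by rewrite (le_trans ler01).
Qed.

Lemma arccosh_val (y : R) : 0 < y -> y <= 1 -> arccosh ((1 + y^+2) / (2 * y)) = - ln y.
Proof.
move=> y0 y1; rewrite /arccosh.
have -> : ((1 + y^+2) / (2 * y)) ^+ 2 - 1 = ((1 - y^+2) / (2 * y)) ^+ 2.
  by field; rewrite gt_eqF.
rewrite sqrtr_sqr ger0_norm; last first.
  by apply: divr_ge0; nra.
have -> : (1 + y ^+ 2) / (2 * y) + (1 - y ^+ 2) / (2 * y) = y^-1.
  by field; rewrite gt_eqF.
by rewrite lnV // posrE.
Qed.

Lemma hdist_lb (a w : pt R) : a.2 = 1 -> 0 < w.2 -> w.2 <= 1 -> - ln w.2 <= hdist a w.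
Proof.
move=> a2 y0 y1; rewrite /hdist a2 -arccosh_val //.
set y := w.2.
have e : (1 + y ^+ 2) / (2 * y) = 1 + (1 - y)^+2 / (2 * 1 * y).
  by field; rewrite gt_eqF.
apply: arccosh_le.
  rewrite e lerDl divr_ge0 ?sqr_ge0 // mulr_ge0 // ?ltW //.
rewrite e lerD2l; apply: ler_wpM2r; first by rewrite invr_ge0; nra.
by rewrite -[X in X <= _]add0r lerD2r sqr_ge0.
Qed.

Lemma hdist_eq (w : pt R) : 0 < w.2 -> w.2 <= 1 -> hdist (w.1, 1) w = - ln w.2.
Proof.
move=> y0 y1; rewrite /hdist /= subrr expr0n /= add0r -arccosh_val //.
by congr arccosh; field; rewrite gt_eqF.
Qed.

Lemma hdist_ub (w : pt R) : 0 < w.2 -> w.2 <= 1 -> -(2^-1) <= w.1 -> w.1 < 2^-1 ->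
  hdist (@pt_i R) w <= - ln w.2 + 1.
Proof.
move=> y0 y1 xl xr; rewrite /hdist /pt_i /=.
set y := w.2; set x := w.1.
set u := 1 + _.
have uE : u = (1 + x^+2 + y^+2) / (2 * y).
  by rewrite /u; field; rewrite gt_eqF.
have u1 : 1 <= u by rewrite /u lerDl divr_ge0 ?addr_ge0 ?sqr_ge0 // mulr_ge0 ?mulr1 // ?ltW.
have key : u + Num.sqrt (u ^+ 2 - 1) <= 2 / y.
  have hx : x ^+ 2 <= 4^-1 by nra.
  have BE : 2 / y - u = (3 - x^+2 - y^+2) / (2 * y).
    by rewrite uE; field; rewrite gt_eqF.
  have B0 : 0 <= 2 / y - u by rewrite BE; apply: divr_ge0; nra.
  rewrite -lerBrDl -[X in _ <= X]ger0_norm // -sqrtr_sqr ler_wsqrtr //.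
  rewrite -subr_ge0.
  have -> : (2 / y - u) ^+ 2 - (u ^+ 2 - 1) = (8 - 8 * x^+2 - 4 * y^+2) / (4 * y^+2).
    by rewrite uE; field; rewrite gt_eqF.
  by apply: divr_ge0; nra.
rewrite /arccosh (le_trans (_ : _ <= ln (2 / y))) //.
  rewrite ler_ln ?posrE ?divr_gt0 //.
  by rewrite ltr_pwDl ?sqrtr_ge0 // (lt_le_trans ltr01).
have l2 : ln (1 + 1 : R) <= 1 by apply: le_ln1Dx; lra.
rewrite ln_div ?posrE //; lra.
Qed.

Definition wp (p : pt R) : pt R := (p.1 - (Num.floor (p.1 + 2^-1))%:~R, p.2).

Lemma wp_range p : -(2^-1) <= (wp p).1 /\ (wp p).1 < 2^-1.
Proof.
rewrite /wp /=; have h1 := floor_le (p.1 + 2^-1).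
have h2 := floorD1_gt (p.1 + 2^-1).
rewrite intrD in h2; split; lra.
Qed.

Lemma wp_shift p (n : int) : wp (p.1 + n%:~R, p.2) = wp p.
Proof.
rewrite /wp /= [p.1 + _ + 2^-1]addrAC floorDrz ?intr_int // intrKfloor intrD.
congr (_, _); ring.
Qed.

Lemma wp_id p : -(2^-1) <= p.1 -> p.1 < 2^-1 -> wp p = p.
Proof.
move=> h1 h2; rewrite /wp (@floor_def _ _ 0); last by rewrite /= add0r; lra.
by rewrite subr0; case: p {h1 h2}.
Qed.

Lemma moeb_coset t g z : Gam_inf t -> \det g = 1 -> 0 < z.2 ->
  exists n : int, moeb (t *m g) z = ((moeb g z).1 + n%:~R, (moeb g z).2).
Proof.
move=> [n [->|->]] dg y0; exists n; first exact: moebT.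
by rewrite mulNmx moebN; exact: moebT.
Qed.

Lemma canon_iff g z (P : pt R -> Prop) : \det g = 1 -> 0 < z.2 ->
  canon_prop (coset_inf g) z P <-> P (wp (moeb g z)).
Proof.
move=> dg y0; split.
  move=> [_ [t tG ->] [[h1 h2] HP]].
  have [n En] := @moeb_coset t g z tG dg y0.
  rewrite En in h1 h2 HP.
  by rewrite -(wp_shift _ n) wp_id.
move=> HP; exists (@transl R (- Num.floor ((moeb g z).1 + 2^-1)) *m g).
  by exists (@transl R (- Num.floor ((moeb g z).1 + 2^-1))) => //; eexists; left.
rewrite moebT //.
have := wp_range (moeb g z); rewrite /wp /= intrN => -[h1 h2]; split => //.
Qed.

Lemma xget_coset g z : \det g = 1 -> 0 < z.2 ->
  wp (moeb (xget 1%:M (coset_inf g)) z) = wp (moeb g z).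
Proof.
move=> dg y0.
have : coset_inf g (xget 1%:M (coset_inf g)).
  apply: xgetPex; exists (@transl R 0 *m g); exists (@transl R 0) => //.
  by exists 0; left.
move=> [t tG ->]; have [n ->] := @moeb_coset t g z tG dg y0.
exact: wp_shift.
Qed.

Lemma hdist_set_eq (w : pt R) : 0 < w.2 -> w.2 <= 1 -> -(2^-1) <= w.1 -> w.1 < 2^-1 ->
  hdist_set (@hseg R) w = - ln w.2.
Proof.
move=> y0 y1 xl xr.
have lb : lbound [set hdist a w | a in @hseg R] (- ln w.2).
  by move=> _ [a [_ [_ a2]] <-]; exact: hdist_lb.
have mem : [set hdist a w | a in @hseg R] (- ln w.2).
  by exists (w.1, 1) => //; rewrite hdist_eq.
apply/eqP; rewrite eq_le; apply/andP; split.
  by apply: ge_inf => //; exists (- ln w.2).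
by apply: lb_le_inf => //; exists (- ln w.2).
Qed.
End Geo.

Section Main.
Variable R : realType.

Lemma countable_cosets (Gam : set 'M[R]_2) : is_fuchsian Gam -> countable (cosets Gam).
Proof.
move=> [_ _ _ _ disc].
have cG : countable Gam.
  apply: (@sub_countable _ _ _ (\bigcup_(n in [set: nat]) [set g | Gam g /\ forall i j, `|g i j| <= n%:R])).
    apply: subset_card_le => g Gg.
    set K := `|g ord0 ord0| + `|g ord0 ord_max| + `|g ord_max ord0| + `|g ord_max ord_max|.
    exists (truncn K).+1 => //; split => // i j.
    apply: le_trans (ltW (truncnS_gt K)).
    have h1 := normr_ge0 (g ord0 ord0); have h2 := normr_ge0 (g ord0 ord_max).
    have h3 := normr_ge0 (g ord_max ord0); have h4 := normr_ge0 (g ord_max ord_max).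
    have Ei : forall k : 'I_2, k = ord0 \/ k = ord_max.
      by move=> k; case: k => [[|[|//]]] Hk; [left|right]; apply: val_inj.
    by rewrite /K; case: (Ei i) => ->; case: (Ei j) => ->; lra.
  apply: bigcup_countable => // n _; apply: finite_set_countable; exact: disc.
exact: (sub_countable (card_image_le _ _) cG).
Qed.
End Main.

Theorem proposition2p2 (R : realType) (Gam : set 'M[R]_2) (z : pt R) (s : R) :
  is_fuchsian Gam ->
  torsion_free Gam ->
  Gam (@transl R 1) ->
  (* Gamma_infty = <z |-> z+1> is the stabilizer of the cusp infinity in Gamma *)
  (forall g, Gam g -> g ord_max ord0 = 0 -> @Gam_inf R g) ->
  1 < s ->
  Hplane z -> z.2 < 1 ->
  (* no element of Gamma maps z into {Im w > 1} *)
  (forall g, Gam g -> (moeb g z).2 <= 1) ->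
  (forall t : R, (Pi_i Gam z t <= Pi_h Gam z t)%E /\
                 (Pi_h Gam z t <= Pi_i Gam z (t + 1))%E) /\
  eisenstein Gam z s =
    (s%:E * \int[@lebesgue_measure R]_(t in [set t : R | (0 <= t)%R])
               ((expR (- (s * t))%R)%:E * Pi_h Gam z t))%E /\
  (s%:E * \int[@lebesgue_measure R]_(t in [set t : R | (0 <= t)%R])
             ((expR (- (s * t))%R)%:E * Pi_i Gam z t) <= eisenstein Gam z s)%E /\
  (eisenstein Gam z s <=
     s%:E * \int[@lebesgue_measure R]_(t in [set t : R | (0 <= t)%R])
             ((expR (- (s * t))%R)%:E * Pi_i Gam z (t + 1)))%E.
Proof.
move=> fG tf T1 stab s1 zH z1 Him.
have [dG _ _ _ _] := fG.
have y0 : 0 < z.2 := zH.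
have s0 : 0 < s by apply: lt_trans s1.
set cos := cosets Gam.
pose wC (C : set 'M[R]_2) := @wp R (moeb (xget 1%:M C) z).
pose yC (C : set 'M[R]_2) := (moeb (xget 1%:M C) z).2.
pose ah C := - ln (yC C).
pose ai C := hdist (@pt_i R) (wC C).
have Fcos : forall C, cos C -> exists2 g, Gam g & C = coset_inf g.
  by move=> C [g Gg <-]; exists g.
have F1 : forall C (P : pt R -> Prop), cos C -> (canon_prop C z P <-> P (wC C)).
  move=> C P /Fcos[g Gg ->]; rewrite /wC xget_coset ?dG //.
  by apply: canon_iff => //; exact: dG.
have FyC : forall C, cos C -> (wC C).2 = yC C by [].
have F2 : forall C, cos C -> 0 < yC C /\ yC C <= 1.
  move=> C /Fcos[g Gg ->]; rewrite -FyC; last by exists g.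
  rewrite /wC xget_coset ?dG //=; split; last exact: Him.
  by apply: divr_gt0 => //; apply: den_pos => //; exact: dG.
have F3 : forall C, -(2^-1) <= (wC C).1 /\ (wC C).1 < 2^-1 by move=> C; exact: wp_range.
have F4 : forall C, cos C -> hdist_set (@hseg R) (wC C) = ah C.
  move=> C cC; have [h1 h2] := F2 C cC; have [h3 h4] := F3 C.
  by rewrite hdist_set_eq // FyC.
have F5 : forall C, cos C -> [/\ 0 <= ah C, ah C <= ai C & ai C <= ah C + 1].
  move=> C cC; have [h1 h2] := F2 C cC; have [h3 h4] := F3 C.
  split.
  - by rewrite /ah oppr_ge0 ln_le0.
  - by rewrite /ah /ai -FyC //; apply: hdist_lb; rewrite ?FyC.
  - by rewrite /ah /ai -FyC //; apply: hdist_ub; rewrite ?FyC.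
have Sgen : forall Q : pt R -> Prop,
    cos `&` [set C | canon_prop C z Q] = cos `&` [set C | Q (wC C)].
  move=> Q; apply/seteqP; split => C [cC HC]; split => //; exact/(F1 C Q cC).
have Eh : forall t, Pi_h Gam z t = (\esum_(C in cos `&` [set C | (ah C <= t)%R]) 1)%E.
  move=> t; rewrite /Pi_h Sgen; congr esum; apply/seteqP; split => C [cC HC];
    by split => //=; move: HC; rewrite /= F4.
have Ei : forall t, Pi_i Gam z t = (\esum_(C in cos `&` [set C | (ai C <= t)%R]) 1)%E.
  by move=> t; rewrite /Pi_i Sgen.
have Ei1 : forall t, Pi_i Gam z (t + 1) =
    (\esum_(C in cos `&` [set C | (ai C - 1 <= t)%R]) 1)%E.
  move=> t; rewrite Ei; congr esum; apply/seteqP; split => C [cC HC]; split => //=;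
    move: HC => /=; rewrite lerBlDr //.
have cc : countable cos by exact: countable_cosets.
have EE : eisenstein Gam z s = (\esum_(C in cos) (expR (- (s * Num.max (ah C) 0)))%:E)%E.
  rewrite /eisenstein; apply: eq_esum => C cC.
  have [a0 _ _] := F5 C cC; have [h1 _] := F2 C cC.
  by rewrite max_l // /ah /powR gt_eqF //= mulrN opprK.
have Hle : forall a b : R, 0 <= b -> b <= Num.max a 0 ->
    ((expR (- (s * Num.max a 0)))%:E <= (expR (- (s * Num.max b 0)))%:E)%E.
  move=> a b b0 hb; rewrite lee_fin ler_expR lerN2 ler_pM2l //.
  by rewrite max_l.
have Hge : forall a b : R, 0 <= b -> a <= b ->
    ((expR (- (s * Num.max b 0)))%:E <= (expR (- (s * Num.max a 0)))%:E)%E.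
  move=> a b b0 hb; rewrite lee_fin ler_expR lerN2 ler_pM2l //.
  by rewrite (max_l b0) ge_max hb.
split; [|split; [|split]].
- move=> t; split.
  + rewrite Eh Ei !esum_mkcondr; apply: le_esum => C cC; rewrite !memle.
    have [_ hai _] := F5 C cC.
    case: ifPn => h; last by case: ifPn.
    have h' : ai C <= t := h; have g : ah C <= t := le_trans hai h'; by rewrite ifT.
  + rewrite Eh Ei1 !esum_mkcondr; apply: le_esum => C cC; rewrite !memle.
    have [_ _ hai] := F5 C cC.
    case: ifPn => h; last by case: ifPn.
    have h' : ah C <= t := h.
    have g : ai C - 1 <= t by rewrite lerBlDr; apply: le_trans hai _; rewrite lerD2r.
    by rewrite ifT.
- rewrite EE; under eq_integral do rewrite Eh.
  by rewrite (@key R _ set0 cos ah s cc s0).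
- rewrite EE; under eq_integral do rewrite Ei.
  rewrite (@key R _ set0 cos ai s cc s0); apply: le_esum => C cC.
  have [h0 h1 _] := F5 C cC; apply: Hle => //.
  by rewrite le_max h1.
- rewrite EE; under eq_integral do rewrite Ei1.
  rewrite (@key R _ set0 cos (fun C => ai C - 1) s cc s0); apply: le_esum => C cC.
  have [h0 _ h1] := F5 C cC; apply: Hge => //.
  by rewrite lerBlDr.
Qed.
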